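(* Let $A$ be a finite alphabet, $w_1,\ldots,w_k\in A^*$, and $N=\max(|w_1|,\ldots,|w_k|)\ge1$. The following are equivalent: (1) $\mathrm{WMIX}(w_1,\ldots,w_k)$ is infinite. (2) There exists a trace $T\subseteq\mathcal P(\mathcal D_N)\cup\mathcal C(\mathcal D_N)$ of some walk in $\mathcal D_N$, written $T=\{\pi\}\cup\{\gamma_1,\ldots,\gamma_m\}$ with $\pi$ its unique path and $\gamma_1,\ldots,\gamma_m$ its pairwise distinct cycles, satisfying both (balance condition) there exist integers $x_1,\ldots,x_m\ge1$ such that \[\mathrm{diff}\Big(\mathrm{occ}(\mathrm{src}(\pi);w_1,\ldots,w_k)+\mathrm{occ}(\pi;w_1,\ldots,w_k)+\sum_{i=1}^m x_i\cdot\mathrm{occ}(\gamma_i;w_1,\ldots,w_k)\Big)=0,\] where $\mathrm{src}(\pi)\in A^N$ is regarded as a word; and (pumping condition) there exist $y_1,\ldots,y_m\in\mathbb N$, not all zero, such that \[\mathrm{diff}\Big(\sum_{i=1}^m y_i\cdot\mathrm{occ}(\gamma_i;w_1,\ldots,w_k)\Big)=0.\]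
   Context: For $u,w\in A^*$, $|w|_u$ is the number of pairs $(x,y)\in A^*\times A^*$ with $xuy=w$. $\mathrm{WMIX}(w_1,\ldots,w_k)=\{w\in A^*\mid|w|_{w_1}=\cdots=|w|_{w_k}\}$. For $\bm v=(c_1,\ldots,c_k)\in\mathbb N^k$, $\mathrm{diff}(\bm v)=\sum_{i=1}^k(\max(c_1,\ldots,c_k)-c_i)$ (so $\mathrm{diff}(\bm v)=0$ iff all coordinates are equal). $\mathrm{suff}(w)$ is the set of suffixes of $w$. A (directed) graph is $\mathcal G=(V,E)$ with $E\subseteq V\times V$. A walk is a sequence $\omega=(v_1,\ldots,v_n)\in V^n$, $n\ge1$, with $(v_i,v_{i+1})\in E$ for all $1\le i<n$; its length is $|\omega|=n-1$, its source $\mathrm{src}(\omega)$ is $v_1$ and its target is $v_n$. $V(\omega)=\{v_1,\ldots,v_n\}$. If the target of $\omega_1=(v_1,\ldots,v_m)$ equals the source of $\omega_2=(v'_1,\ldots,v'_n)$, then $\omega_1\odot\omega_2=(v_1,\ldots,v_m,v'_2,\ldots,v'_n)$. A loop is a non-empty walk whose source equals its target. A path is a walk whose vertices are pairwise distinct (empty walks are paths). A cycle is a loop $(v,v_1,\ldots,v_n,v)$ such that $(v,v_1,\ldots,v_n)$ is a path. $\mathcal W(\mathcal G),\mathcal P(\mathcal G),\mathcal C(\mathcal G)$ denote the sets of walks, paths and cycles. For a sequence of cycles $\Gamma=(\gamma_1,\ldots,\gamma_n)$: $|\Gamma|_\gamma=\#\{i\mid\gamma_i=\gamma\}$, $\Gamma.\gamma=(\gamma_1,\ldots,\gamma_n,\gamma)$;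 $\emptyset$ is the empty sequence. Decomposition $\mathrm{dec}_{\mathcal G}:\mathcal W(\mathcal G)\to\mathcal P(\mathcal G)\times\mathcal C(\mathcal G)^*$, by induction on length: $\mathrm{dec}_{\mathcal G}((v))=((v),\emptyset)$; for a walk $\omega$ with target $v$ and an edge $(v,v')$, let $(\pi,\Gamma)=\mathrm{dec}_{\mathcal G}(\omega)$ (the target of $\pi$ is $v$); if $v'\notin V(\pi)$ then $\mathrm{dec}_{\mathcal G}(\omega\odot(v,v'))=(\pi\odot(v,v'),\Gamma)$; otherwise, writing $\pi=(v_1,\ldots,v_{j-1},v',v_{j+1},\ldots,v)$, $\mathrm{dec}_{\mathcal G}(\omega\odot(v,v'))=((v_1,\ldots,v_{j-1},v'),\ \Gamma.(v',v_{j+1},\ldots,v,v'))$. Multi-trace: for $\omega\in\mathcal W(\mathcal G)$ with $(\pi_\omega,\Gamma)=\mathrm{dec}_{\mathcal G}(\omega)$, $\mathrm{mtr}(\omega):\mathcal P(\mathcal G)\cup\mathcal C(\mathcal G)\to\mathbb N$ is given by $\mathrm{mtr}(\omega)(\pi)=1$ if $\pi=\pi_\omega$ and $0$ for other paths $\pi$, and $\mathrm{mtr}(\omega)(\gamma)=|\Gamma|_\gamma$ for cycles $\gamma$. The trace of $\omega$ is $\mathrm{tr}(\omega)=\{x\in\mathcal P(\mathcal G)\cup\mathcal C(\mathcal G)\mid\mathrm{mtr}(\omega)(x)\neq0\}$; it contains exactly one path. The $N$-dimensional de Bruijn graph $\mathcal D_N=(A^N,E)$ has vertex set $A^N$ and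 edge set $E=\{(av,vb)\mid a,b\in A,\ v\in A^{N-1}\}$. $\mathrm{suf}(w;w_1,\ldots,w_k)=(c_1,\ldots,c_k)\in\mathbb N^k$ with $c_i=1$ if $w_i\in\mathrm{suff}(w)$ and $0$ otherwise; $\mathrm{occ}(w;w_1,\ldots,w_k)=(|w|_{w_1},\ldots,|w|_{w_k})$ for a word $w$; for a walk $\omega=(v_0,v_1,\ldots,v_n)$ in $\mathcal D_N$, $\mathrm{occ}(\omega;w_1,\ldots,w_k)=\sum_{i=1}^n\mathrm{suf}(v_i;w_1,\ldots,w_k)$ (zero vector if $n=0$). *)

(* Defs.v *)
From mathcomp Require Import all_boot.
Set Implicit Arguments. Unset Strict Implicit. Unset Printing Implicit Defensive.

Section Defs.
Variable A : finType.

(* |w|_u : number of pairs (x,y) with x ++ u ++ y = w; indexed by i = |x|. *)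
Definition nocc (u w : seq A) : nat :=
  count (fun i => take (size u) (drop i w) == u) (iota 0 (size w).+1).

Definition in_wmix (ws : seq (seq A)) (w : seq A) : Prop :=
  forall u v, u \in ws -> v \in ws -> nocc u w = nocc v w.

(* Vectors in N^k are represented as seq nat of length k. *)
Definition vadd (v1 v2 : seq nat) : seq nat := [seq p.1 + p.2 | p <- zip v1 v2].
Definition vscale (x : nat) (v : seq nat) : seq nat := [seq x * c | c <- v].
Definition vsum (k : nat) (vs : seq (seq nat)) : seq nat := foldr vadd (nseq k 0) vs.

Definition vdiff (v : seq nat) : nat := \sum_(c <- v) ((\max_(d <- v) d) - c).

Definition occ_word (w : seq A) (ws : seq (seq A)) : seq nat := [seq nocc u w | u <- ws].

Definition suf (v : seq A) (ws : seq (seq A)) : seq nat :=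
  [seq nat_of_bool (suffix u v) | u <- ws].

Definition occ_walk (om : seq (seq A)) (ws : seq (seq A)) : seq nat :=
  vsum (size ws) [seq suf v ws | v <- behead om].

(* N-dimensional de Bruijn graph: vertices are words of length N,
   edges (a v, v b). *)
Definition db_vertex (N : nat) (u : seq A) : bool := size u == N.
Definition db_edge (N : nat) (u v : seq A) : bool :=
  [&& size u == N, size v == N & behead u == take N.-1 v].

Definition db_walk (N : nat) (om : seq (seq A)) : bool :=
  match om with
  | [::] => false
  | v :: om' => db_vertex N v && path (db_edge N) v om'
  end.

Definition dec_step (pg : seq (seq A) * seq (seq (seq A))) (v' : seq A) :=
  let: (pi, G) := pg in
  if v' \in pi then
    let j := index v' pi in (take j.+1 pi, rcons G (rcons (drop j pi) v'))
  else (rcons pi v', G).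

Definition dec (om : seq (seq A)) : seq (seq A) * seq (seq (seq A)) :=
  match om with
  | [::] => ([::], [::])
  | v :: om' => foldl dec_step ([:: v], [::]) om'
  end.

End Defs.

(* Main.v *)
Require Import Defs.
From mathcomp Require Import all_boot zify.
From Stdlib Require Import Classical IndefiniteDescription.
Set Implicit Arguments. Unset Strict Implicit. Unset Printing Implicit Defensive.

Lemma min_exists (P : nat -> Prop) : (exists n, P n) ->
  exists n, P n /\ forall m, P m -> n <= m.
Proof.
move=> [n Pn].
suff H : forall k n, n <= k -> P n -> exists n, P n /\ forall m, P m -> n <= m.
  exact: H Pn.
elim=> [|k IH] {}n hn {}Pn.
  by exists n; split => // m _; move: hn; rewrite leqn0 => /eqP ->.
case: (classic (exists n', n' < n /\ P n')) => [[n' [h1 h2]]|hno].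
  by apply: (IH n') => //; rewrite -ltnS; exact: leq_trans h1 hn.
exists n; split => // m Pm; rewrite leqNgt; apply/negP => hm; apply: hno.
by exists m.
Qed.

Lemma subseq_mono (a : nat -> nat) :
  exists g, (forall n, g n < g n.+1) /\ forall n, a (g n) <= a (g n.+1).
Proof.
have H p : exists q, p < q /\ forall q', p < q' -> a q <= a q'.
  have [v [[q [hq Eq]] hv]] := @min_exists (fun v => exists q, p < q /\ a q = v)
    (ex_intro _ (a p.+1) (ex_intro _ p.+1 (conj (ltnSn p) erefl))).
  exists q; split => // q' hq'; rewrite Eq; apply: hv; by exists q'.
pose nxt p := proj1_sig (constructive_indefinite_description _ (H p)).
have nxtP p : p < nxt p /\ forall q', p < q' -> a (nxt p) <= a q'.
  exact: (proj2_sig (constructive_indefinite_description _ (H p))).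
exists (fun n => iter n.+1 nxt 0); split => n.
  by rewrite [iter n.+2 _ _]/= ; case: (nxtP (iter n.+1 nxt 0)).
rewrite [iter n.+2 _ _]/=.
case: (nxtP (iter n.+1 nxt 0)) => h1 _.
case: n h1 => [|n] h1 /=.
  by case: (nxtP 0) => _ h; apply: h; exact: leq_ltn_trans (leq0n _) h1.
by case: (nxtP (iter n.+1 nxt 0)) => h0 h; apply: h; exact: ltn_trans h0 h1.
Qed.

Lemma dickson K (f : nat -> nat -> nat) :
  exists g : nat -> nat, (forall n, g n < g n.+1) /\
    forall t, t < K -> forall n, f (g n) t <= f (g n.+1) t.
Proof.
elim: K => [|K [g [hg hf]]]; first by exists id.
have [h [hh ha]] := subseq_mono (fun n => f (g n) K).
exists (fun n => g (h n)); split.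
  by move=> n; apply: (homo_ltn (@ltn_trans) hg); exact: hh.
move=> t; rewrite ltnS leq_eqVlt => /orP [/eqP ->|ht] n; first exact: ha.
by apply: (homo_leq leqnn (@leq_trans) (hf t ht)); exact: ltnW (hh n).
Qed.

Lemma dickson2 K (f : nat -> nat -> nat) :
  exists i j, i < j /\ forall t, t < K -> f i t <= f j t.
Proof. by have [g [hg hf]] := dickson K f; exists (g 0), (g 1); split => // t /hf. Qed.

Fixpoint allseqs (T : Type) (V : seq T) n : seq (seq T) :=
  if n is n'.+1 then [::] :: [seq x :: s | x <- V, s <- allseqs V n'] else [:: [::]].

Lemma mem_allseqs (T : eqType) (V : seq T) n s :
  all (mem V) s -> size s <= n -> s \in allseqs V n.
Proof.
elim: n s => [|n IH] [|x s] //= /andP [xV sV] hs.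
by rewrite inE; apply/orP; right; apply: allpairs_f => //; apply: IH.
Qed.

Lemma leq_sum_mem (T : eqType) (r : seq T) x (F : T -> nat) :
  x \in r -> F x <= \sum_(y <- r) F y.
Proof. by move=> xr; rewrite (big_rem x) //= leq_addr. Qed.

Lemma sum_undup_count (T : eqType) (G : seq T) (F : T -> nat) :
  \sum_(g <- G) F g = \sum_(g <- undup G) count_mem g G * F g.
Proof.
rewrite -big_undup_iterop_count; apply: eq_bigr => g _.
by rewrite Monoid.Theory.iteropE iter_addn_0 mulnC.
Qed.

Lemma sum_perm_mem (T : eqType) (s1 s2 : seq T) (F : T -> nat) :
  uniq s1 -> uniq s2 -> s1 =i s2 -> \sum_(g <- s1) F g = \sum_(g <- s2) F g.
Proof. by move=> u1 u2 e; apply: perm_big; apply: uniq_perm. Qed.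

Lemma zip_index (T : eqType) (gs : seq T) (cs : seq nat) (F : T -> nat) :
  uniq gs -> size cs = size gs ->
  \sum_(p <- zip cs gs) p.1 * F p.2 = \sum_(g <- gs) nth 0 cs (index g gs) * F g.
Proof.
elim: gs cs => [|g gs IH] [|c cs] //=; first by rewrite !big_nil.
move=> /andP [gn ug] [hs].
rewrite !big_cons /= eqxx IH //; congr (_ + _).
apply: eq_big_seq => g' g'in; rewrite /=.
by case: eqP => // E; move: gn; rewrite E g'in.
Qed.

Lemma zip_map_self (T : eqType) (gs : seq T) (c : T -> nat) (F : T -> nat) :
  \sum_(p <- zip [seq c g | g <- gs] gs) p.1 * F p.2 = \sum_(g <- gs) c g * F g.
Proof. by elim: gs => [|g gs IH]; rewrite ?big_nil //= !big_cons IH. Qed.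


Section Vec.

Lemma size_vadd v1 v2 : size (vadd v1 v2) = minn (size v1) (size v2).
Proof. by rewrite /vadd size_map size_zip. Qed.

Lemma nth_vadd v1 v2 t : t < size v1 -> t < size v2 ->
  nth 0 (vadd v1 v2) t = nth 0 v1 t + nth 0 v2 t.
Proof.
move=> h1 h2; rewrite /vadd (nth_map (0,0)); last by rewrite size_zip leq_min h1.
by rewrite nth_zip_cond size_zip leq_min h1 h2.
Qed.

Lemma size_vscale x v : size (vscale x v) = size v.
Proof. by rewrite size_map. Qed.

Lemma nth_vscale x v t : nth 0 (vscale x v) t = x * nth 0 v t.
Proof.
case: (ltnP t (size v)) => h; first by rewrite (nth_map 0).
by rewrite !nth_default ?muln0 ?size_map.
Qed.

Lemma vsum_size k vs : all (fun v => size v == k) vs -> size (vsum k vs) = k.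
Proof.
elim: vs => [|v vs IH] /=; first by rewrite size_nseq.
by case/andP=> /eqP h1 h2; rewrite size_vadd IH // h1 minnn.
Qed.

Lemma nth_vsum k vs t : all (fun v => size v == k) vs -> t < k ->
  nth 0 (vsum k vs) t = \sum_(v <- vs) nth 0 v t.
Proof.
move=> H ht; elim: vs H => [|v vs IH] /=; first by rewrite big_nil nth_nseq ht.
case/andP=> /eqP h1 h2; rewrite big_cons nth_vadd ?IH ?h1 ?vsum_size //.
Qed.

Lemma vdiff0P v : vdiff v = 0 <->
  (forall t t', t < size v -> t' < size v -> nth 0 v t = nth 0 v t').
Proof.
rewrite /vdiff; set M := \max_(d <- v) d.
have leM c : c \in v -> c <= M by move=> h; rewrite /M; exact: (leq_bigmax_seq c).
split.
- move/eqP; rewrite sum_nat_seq_eq0 => /allP H.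
  have E c : c \in v -> c = M.
    move=> cv; apply/eqP; rewrite eqn_leq leM //=.
    by move: (H c cv) => /=; rewrite subn_eq0.
  by move=> t t' ht ht'; rewrite (E _ (mem_nth 0 ht)) (E _ (mem_nth 0 ht')).
- move=> H; apply/eqP; rewrite sum_nat_seq_eq0; apply/allP => c cv /=.
  rewrite subn_eq0.
  case: v H @M leM cv => [|c0 v] H M leM cv //.
  have E d : d \in c0 :: v -> d = c0.
    by move=> /(nthP 0) [i hi <-]; exact: (H i 0 hi).
  rewrite (E c cv) /M; apply/bigmax_leqP_seq => d dv _; rewrite (E d dv).
  by [].
Qed.

End Vec.


Section Words.
Variable A : finType.
Implicit Types u w s : seq A.

Lemma count_iotaS (P : pred nat) m n : count P (iota m.+1 n) = count (fun i => P i.+1) (iota m n).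
Proof. by elim: n m => //= n IH m; rewrite IH. Qed.
Lemma nocc_cons u a w : nocc u (a :: w) = prefix u (a :: w) + nocc u w.
Proof.
have E n (P : pred nat) : count P (iota 0 n.+1) = P 0 + count (fun i => P i.+1) (iota 0 n).
  by rewrite [iota 0 n.+1]/= [count _ (_ :: _)]/= count_iotaS.
rewrite /nocc [size (a :: w)]/= E prefixE; congr (_ + _).
Qed.

Lemma nocc_nil u : nocc u [::] = (u == [::]).
Proof. by rewrite /nocc /= addn0; case: u. Qed.

Lemma prefix_rcons_eq u s b :
  prefix u (rcons s b) = prefix u s || (u == rcons s b).
Proof.
elim: s u => [|x s IH] [|y u] //=.
by rewrite IH eqseq_cons andb_orr.
Qed.

Lemma suffix_cons_eq u a s :
  suffix u (a :: s) = suffix u s || (u == a :: s).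
Proof.
rewrite /suffix rev_cons prefix_rcons_eq -rev_cons.
by rewrite (can_eq revK).
Qed.

Lemma nocc_rcons u w b : nocc u (rcons w b) = nocc u w + suffix u (rcons w b).
Proof.
elim: w => [|a w IH].
  rewrite /= nocc_cons !nocc_nil.
  case: u => [|y [|z u]] //; first by rewrite /suffix /= addnC.
  have: ~~ suffix [:: y, z & u] [:: b] by apply/negP => /size_suffix.
  by move/negbTE => ->; rewrite /= andbF.
have E1 : nocc u (rcons (a :: w) b) = prefix u (rcons (a::w) b) + nocc u (rcons w b).
  exact: nocc_cons u a (rcons w b).
have E2 : suffix u (rcons (a::w) b) = suffix u (rcons w b) || (u == rcons (a::w) b).
  exact: suffix_cons_eq u a (rcons w b).
rewrite E1 IH nocc_cons E2 prefix_rcons_eq.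
case: (boolP (u == rcons (a :: w) b)) => [/eqP EQ|nQ].
  have -> : prefix u (a :: w) = false.
    by apply/negbTE/negP; rewrite EQ => /size_prefix; rewrite size_rcons ltnn.
  have -> : suffix u (rcons w b) = false.
    by apply/negbTE/negP; rewrite EQ => /size_suffix; rewrite /= size_rcons ltnn.
  by rewrite addn0 add0n addnC.
by case: (prefix u (a :: w)); case: (suffix u (rcons w b)); rewrite ?add0n ?addnA.
Qed.

Lemma suffix_window u y s : suffix y s -> size u <= size y ->
  suffix u s = suffix u y.
Proof.
move=> /suffixP [s' ->] h; rewrite !suffixE size_cat drop_cat.
have -> : size s' + size y - size u = size s' + (size y - size u).
  by rewrite addnBA.
rewrite ltnNge leq_addr /= addKn; by [].
Qed.

Variable N : nat.
Hypothesis N1 : 1 <= N.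

Definition wordof (x : seq A) (p : seq (seq A)) :=
  x ++ flatten [seq drop N.-1 v | v <- p].

Lemma path_size_last x p : path (@db_edge A N) x p -> size x = N ->
  size (last x p) = N.
Proof.
elim: p x => [|y p IH] x //= /andP [e hp] _; apply: IH hp _.
by case/and3P: e => _ /eqP.
Qed.

Lemma drop_last1 (y : seq A) : size y = N -> exists c, drop N.-1 y = [:: c].
Proof.
move=> hy.
have h1 : N - N.-1 = 1 by move: N1; case: (N) => // n _; rewrite subSn // subnn.
case E: (drop N.-1 y) => [|c [|d l]].
- by move: (f_equal size E); rewrite size_drop hy h1.
- by exists c.
- by move: (f_equal size E); rewrite size_drop hy h1.
Qed.

Lemma walk_word u x p : path (@db_edge A N) x p -> size x = N -> size u <= N ->
  nocc u (wordof x p) = nocc u x + \sum_(v <- p) suffix u v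
  /\ suffix (last x p) (wordof x p).
Proof.
move=> hp hx hu; elim/last_ind: p hp => [|p y IH].
  by rewrite /wordof /= cats0 big_nil addn0 suffix_refl.
rewrite rcons_path => /andP [hp e].
have [IH1 IH2] := IH hp.
have hz := path_size_last hp hx.
case/and3P: e => _ /eqP hy /eqP ebz.
have [c hc] := drop_last1 hy.
have ey : y = rcons (behead (last x p)) c.
  by rewrite -cats1 ebz -hc cat_take_drop.
have wr : wordof x (rcons p y) = rcons (wordof x p) c.
  by rewrite /wordof map_rcons flatten_rcons hc catA cats1.
have sy : suffix y (wordof x (rcons p y)).
  move/suffixP: IH2 => [s' Es']; rewrite wr Es' ey.
  case E: (last x p) hz => [|z l] hz; first by move: N1; rewrite -hz.
  by rewrite /= suffix_rcons eqxx /= -cat1s catA suffix_suffix.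
split; last by rewrite last_rcons.
rewrite wr nocc_rcons IH1 big_rcons /= -wr (suffix_window sy) ?hy //.
by rewrite addnA.
Qed.

Lemma word_walk w : N <= size w ->
  exists p, path (@db_edge A N) (take N w) p /\ wordof (take N w) p = w.
Proof.
elim/last_ind: w => [|w b IH]; first by rewrite /= leqn0 => /eqP h; move: N1; rewrite h.
rewrite size_rcons => hN; case: (ltnP (size w) N) => hw.
  exists [::]; rewrite /wordof /= cats0 take_oversize //.
  by rewrite size_rcons.
have [p [hp hwp]] := IH hw.
have hx : size (take N w) = N by rewrite size_takel.
have hz := path_size_last hp hx.
have [_ sz] := walk_word (u := [::]) hp hx (leq0n _).
rewrite hwp in sz.
set z := last (take N w) p in hz sz.
set y := rcons (behead z) b.
have sb : size (behead z) = N.-1 by rewrite size_behead hz.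
have tw : take N (rcons w b) = take N w.
  by rewrite -cats1 takel_cat.
exists (rcons p y); rewrite tw rcons_path hp /=; split.
  apply/and3P; split; first by apply/eqP.
    by rewrite /y size_rcons sb; case: N N1.
  by rewrite /y -cats1 -sb take_size_cat.
rewrite /wordof map_rcons flatten_rcons catA -/(wordof _ _).
by rewrite hwp /y -cats1 -sb drop_size_cat // cats1.
Qed.

End Words.


Section Dec.
Variable A : finType.
Variable N : nat.
Local Notation V := (seq A).
Local Notation e := (@db_edge A N).

Fixpoint goodc (pi : seq V) (G : seq (seq V)) : bool :=
  if G is g :: G' then
    ((head [::] g \in pi) || has (fun g' => head [::] g \in g') G') && goodc pi G'
  else true.

Lemma goodc_sub pi pi' G : {subset pi <= pi'} -> goodc pi G -> goodc pi' G.
Proof.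
move=> S; elim: G => //= g G IH /andP [/orP [h|h] hG]; rewrite IH // andbT.
  by rewrite S.
by rewrite h orbT.
Qed.

Lemma goodc_rcons pi pi' G g :
  (forall v, v \in pi -> (v \in pi') || (v \in g)) -> head [::] g \in pi' ->
  goodc pi G -> goodc pi' (rcons G g).
Proof.
move=> S hg; elim: G => [|h G IH] /=; first by rewrite hg.
case/andP => /orP [h1|h1] hG; rewrite IH // andbT has_rcons.
  by case/orP: (S _ h1) => -> //; rewrite orbT.
by rewrite h1 !orbT.
Qed.

Definition cyc (g : seq V) : Prop :=
  exists c r, [/\ g = c :: r, path e c r, last c r = c, r != [::] & uniq r]
  /\ all (fun v => size v == N) g.

Definition Inv (x : V) (p : seq V) (st : seq V * seq (seq V)) : Prop :=
  let: (pi, G) := st in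
  exists pr, [/\ pi = x :: pr, path e x pr, uniq pi, last x pr = last x p
    & all (fun v => size v == N) pi]
  /\ (forall g, g \in G -> cyc g)
  /\ (forall f : V -> nat, \sum_(v <- p) f v =
        \sum_(v <- pr) f v + \sum_(g <- G) \sum_(v <- behead g) f v)
  /\ goodc pi G.

Lemma Inv_step x p st y : Inv x p st -> e (last x p) y ->
  Inv x (rcons p y) (dec_step st y).
Proof.
case: st => pi G [pr [[Epi hpath hu hlast hsz] [hcyc [hsum hgood]]]] he.
have hy : size y == N by case/and3P: he.
rewrite /dec_step; case: ifP => yin.
- set j := index y pi.
  have jlt : j < size pi by rewrite index_mem.
  have nj : nth [::] pi j = y by rewrite nth_index.
  have Ed : drop j pi = y :: drop j pr.
    by rewrite (drop_nth [::] jlt) nj Epi.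
  have Et : take j.+1 pi = x :: take j pr by rewrite Epi.
  have Et2 : take j.+1 pi = rcons (take j pi) y by rewrite (take_nth [::] jlt) nj.
  have hlt : last x (take j pr) = y.
    by have := congr1 (last x) (etrans (esym Et) Et2); rewrite /= last_rcons.
  have hp2 := hpath; rewrite -(cat_take_drop j pr) cat_path hlt in hp2.
  case/andP: hp2 => hpt hpd.
  have ld : last y (drop j pr) = last x p.
    by rewrite -hlast -{2}(cat_take_drop j pr) last_cat hlt.
  have hu2 := hu; rewrite -(cat_take_drop j.+1 pi) cat_uniq in hu2.
  case/and3P: hu2 => hut hdis hud.
  have Edj : drop j.+1 pi = drop j pr by rewrite Epi.
  have ynd : y \notin drop j pr.
    apply/negP => yd; move/negP: hdis; apply; apply/hasP; exists y.
      by rewrite Edj.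
    by rewrite Et2 mem_rcons mem_head.
  exists (take j pr); split; [split|split; [|split]].
  + by rewrite Et.
  + exact: hpt.
  + exact: take_uniq.
  + by rewrite hlt last_rcons.
  + by apply/allP => v /mem_take hv; exact: (allP hsz v hv).
  + move=> g; rewrite mem_rcons inE => /orP [/eqP ->|]; last exact: hcyc.
    exists y, (rcons (drop j pr) y); split; last first.
      apply/allP => v; rewrite mem_rcons inE => /orP [/eqP -> //|/mem_drop hv].
      exact: (allP hsz v hv).
    split.
    * by rewrite Ed.
    * by rewrite rcons_path hpd ld.
    * by rewrite last_rcons.
    * by case: (drop j pr).
    * by rewrite rcons_uniq ynd -Edj.
  + move=> f; rewrite big_rcons /= hsum big_rcons Ed /= big_rcons /=.
    rewrite -{1}(cat_take_drop j pr) big_cat /=.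
    by rewrite -!addnA; congr (_ + _); rewrite addnCA addnA.
  + apply: goodc_rcons hgood.
      move=> v vp; rewrite -{1}(cat_take_drop j.+1 pi) mem_cat in vp.
      case/orP: vp => [-> //|]; rewrite Edj => vd.
      by rewrite Ed mem_rcons inE /= inE vd !orbT.
    by rewrite Ed /= Et2 mem_rcons mem_head.
- exists (rcons pr y); split; [split|split; [|split]].
  + by rewrite Epi.
  + by rewrite rcons_path hpath hlast.
  + by rewrite rcons_uniq yin hu.
  + by rewrite !last_rcons.
  + by rewrite all_rcons hy hsz.
  + exact: hcyc.
  + by move=> f; rewrite !big_rcons /= hsum addnAC.
  + by apply: goodc_sub hgood => v; rewrite mem_rcons inE orbC => ->.
Qed.

Lemma dec_inv x p : path e x p -> size x = N -> Inv x p (dec (x :: p)).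
Proof.
move=> hp hx; rewrite /dec.
elim/last_ind: p hp => [|p y IH].
  move=> _ /=; exists [::]; split; [split|split; [|split]] => //=.
  - by rewrite hx eqxx.
  - by move=> f; rewrite !big_nil.
rewrite rcons_path => /andP [hp he]; rewrite foldl_rcons.
exact: Inv_step (IH hp) he.
Qed.


Definition rep m (r : seq V) := flatten (nseq m r).

Lemma rep_path c r m : path e c r -> last c r = c ->
  path e c (rep m r) /\ last c (rep m r) = c.
Proof.
move=> hp hl; elim: m => [|m [IH1 IH2]] //=.
by rewrite /rep /= cat_path hp hl IH1 last_cat hl.
Qed.

Lemma rep_sum (f : V -> nat) m r : \sum_(v <- rep m r) f v = m * \sum_(v <- r) f v.
Proof. by elim: m => [|m IH]; rewrite /rep /= ?big_nil // big_cat -/(rep _ _) IH mulSn. Qed.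

Lemma mem_rep m r v : 0 < m -> v \in r -> v \in rep m r.
Proof. by case: m => // m _ vr; rewrite /rep /= mem_cat vr. Qed.

Lemma splice a L c r m : c \in a :: L -> path e a L -> path e c r -> last c r = c ->
  exists L', [/\ path e a L',
    (forall f : V -> nat, \sum_(v <- L') f v = \sum_(v <- L) f v + m * \sum_(v <- r) f v),
    {subset L <= L'} & (0 < m -> {subset r <= L'})].
Proof.
move=> cin hp hr hl; have [hr1 hl1] := rep_path m hr hl.
rewrite inE in cin; case/orP: cin => [/eqP Ec|cL].
- exists (rep m r ++ L); split.
  + by rewrite cat_path -Ec hr1 hl1 Ec hp.
  + by move=> f; rewrite big_cat rep_sum addnC.
  + by move=> v vL; rewrite mem_cat vL orbT.
  + by move=> m0 v vr; rewrite mem_cat mem_rep.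
- case/splitPr: cL hp => L1 L2 hp.
  exists (L1 ++ c :: (rep m r ++ L2)); split.
  + move: hp; rewrite !cat_path /= => /andP [-> /andP [-> h2]] /=.
    by rewrite cat_path hr1 hl1 h2.
  + by move=> f; rewrite !big_cat !big_cons big_cat rep_sum /=; lia.
  + by move=> v; rewrite !mem_cat !inE mem_cat => /orP [->|/orP [->|->]]; rewrite ?orbT.
  + by move=> m0 v vr; rewrite mem_cat inE mem_cat mem_rep ?orbT.
Qed.

Fixpoint lastocc (H : seq (seq V)) : seq (seq V) :=
  if H is g :: H' then (if g \in H' then lastocc H' else g :: lastocc H') else [::].

Lemma mem_lastocc H x : (x \in lastocc H) = (x \in H).
Proof.
elim: H => //= g H IH; case: ifP => gH; rewrite inE IH //.
by case: (x =P g) => [->|]; rewrite ?gH.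
Qed.

Lemma lastocc_uniq H : uniq (lastocc H).
Proof. by elim: H => //= g H IH; case: ifP => gH //=; rewrite mem_lastocc gH IH. Qed.

Lemma splice_all a L H (m : seq V -> nat) :
  goodc (a :: L) H -> (forall g, g \in H -> cyc g) -> (forall g, g \in H -> 0 < m g) ->
  path e a L ->
  exists L', [/\ path e a L',
    (forall f : V -> nat, \sum_(v <- L') f v = \sum_(v <- L) f v +
        \sum_(g <- lastocc H) m g * \sum_(v <- behead g) f v),
    {subset L <= L'} & (forall g, g \in H -> {subset g <= a :: L'})].
Proof.
move=> + hcyc hm hp; elim: H hcyc hm => [|g H IH] hcyc hm /=.
  by move=> _; exists L; split => // f; rewrite big_nil addn0.
case/andP => hg hgood.
have sub : {subset H <= g :: H} by move=> z zH; rewrite inE zH orbT.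
have [L1 [hp1 hs1 hsub1 hgs1]] := IH (fun g' h => hcyc g' (sub _ h))
  (fun g' h => hm g' (sub _ h)) hgood.
case: ifP => gH.
  exists L1; split => // g'; rewrite inE => /orP [/eqP ->|]; exact: hgs1.
have [c [r [[Eg hr hl rn ur] _]]] := hcyc g (mem_head _ _).
have cin : c \in a :: L1.
  case/orP: hg; rewrite Eg /=.
    by rewrite !inE => /orP [->|/hsub1 ->]; rewrite ?orbT.
  by case/hasP => g' g'H cg'; exact: hgs1 g'H c cg'.
have [L' [hp' hs' hsub' hr']] := splice (m g) cin hp1 hr hl.
exists L'; split => //.
- by move=> f; rewrite hs' hs1 big_cons Eg /= -addnA [m (c :: r) * _ + _]addnC.
- by move=> v /hsub1 /hsub'.
- move=> g'; rewrite inE => /orP [/eqP ->|g'H] v.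
    rewrite Eg inE => /orP [/eqP ->|vr].
      by move: cin; rewrite !inE => /orP [->|/hsub' ->]; rewrite ?orbT.
    by rewrite inE hr' ?orbT //; apply: hm; exact: mem_head.
  move/(hgs1 _ g'H); rewrite !inE => /orP [->|/hsub' ->] //; by rewrite orbT.
Qed.

End Dec.


Section Coord.
Variable A : finType.
Variable ws : seq (seq A).
Local Notation k := (size ws).

Definition Fs (u : seq A) (g : seq (seq A)) : nat := \sum_(v <- behead g) suffix u v.

Lemma occ_word_size w : size (occ_word w ws) = k.
Proof. by rewrite size_map. Qed.

Lemma occ_word_nth w t : t < k -> nth 0 (occ_word w ws) t = nocc (nth [::] ws t) w.
Proof. by move=> ht; rewrite (nth_map [::]). Qed.

Lemma occ_walk_size om : size (occ_walk om ws) = k.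
Proof. by rewrite /occ_walk vsum_size //; apply/allP => v /mapP [y _ ->]; rewrite size_map. Qed.

Lemma occ_walk_nth om t : t < k -> nth 0 (occ_walk om ws) t = Fs (nth [::] ws t) om.
Proof.
move=> ht; rewrite /occ_walk nth_vsum //; last first.
  by apply/allP => v /mapP [y _ ->]; rewrite size_map.
by rewrite big_map; apply: eq_bigr => v _; rewrite (nth_map [::]).
Qed.

Definition Zv (cs : seq nat) (gs : seq (seq (seq A))) :=
  vsum k [seq vscale p.1 (occ_walk p.2 ws) | p <- zip cs gs].

Lemma Zv_size cs gs : size (Zv cs gs) = k.
Proof.
rewrite /Zv vsum_size //; apply/allP => v /mapP [y _ ->].
by rewrite size_vscale occ_walk_size.
Qed.

Lemma Zv_nth cs gs t : t < k ->
  nth 0 (Zv cs gs) t = \sum_(p <- zip cs gs) p.1 * Fs (nth [::] ws t) p.2.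
Proof.
move=> ht; rewrite /Zv nth_vsum //; last first.
  by apply/allP => v /mapP [y _ ->]; rewrite size_vscale occ_walk_size.
by rewrite big_map; apply: eq_bigr => p _; rewrite nth_vscale occ_walk_nth.
Qed.

Definition Bv h pi cs gs := vadd (vadd (occ_word h ws) (occ_walk pi ws)) (Zv cs gs).

Lemma Bv_size h pi cs gs : size (Bv h pi cs gs) = k.
Proof. by rewrite /Bv !size_vadd occ_word_size occ_walk_size Zv_size !minnn. Qed.

Lemma Bv_nth h pi cs gs t : t < k ->
  nth 0 (Bv h pi cs gs) t = nocc (nth [::] ws t) h + Fs (nth [::] ws t) pi +
     \sum_(p <- zip cs gs) p.1 * Fs (nth [::] ws t) p.2.
Proof.
move=> ht; rewrite /Bv nth_vadd ?size_vadd ?occ_word_size ?occ_walk_size ?Zv_size ?minnn //.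
by rewrite nth_vadd ?occ_word_size ?occ_walk_size // occ_word_nth // occ_walk_nth // Zv_nth.
Qed.

Lemma const_ws (v : seq nat) (F : seq A -> nat) :
  vdiff v = 0 -> size v = k -> (forall t, t < k -> nth 0 v t = F (nth [::] ws t)) ->
  forall u u', u \in ws -> u' \in ws -> F u = F u'.
Proof.
move=> /vdiff0P H hs hF u u' hu hu'.
rewrite -(nth_index [::] hu) -(nth_index [::] hu') -!hF ?index_mem //.
by apply: H; rewrite hs index_mem.
Qed.

End Coord.

Lemma nocc_nil_l (A : finType) (w : seq A) : nocc [::] w = (size w).+1.
Proof.
rewrite /nocc (eq_count (a2 := predT)) ?count_predT ?size_iota //.
by move=> i; rewrite /= take0.
Qed.

Lemma size_wordof (A : finType) N (N1 : 0 < N) x (p : seq (seq A)) :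
  path (db_edge N) x p -> size x = N -> size (wordof N x p) = N + size p.
Proof.
move=> hp hx; have [h _] := walk_word N1 (u := [::]) hp hx (leq0n _).
move: h; rewrite !nocc_nil_l hx (eq_bigr (fun _ => 1)) ?sum1_size; last first.
  by move=> v _; rewrite suffix0s.
by rewrite addSn => [[]].
Qed.

Lemma dir21 (A : finType) (ws : seq (seq A)) N (N1 : 0 < N)
  (hu : forall u, u \in ws -> size u <= N) (ws0 : ws != [::]) (om : seq (seq A)) pi G
  (hom : db_walk N om) (E : dec om = (pi, G)) (xs ys : seq nat) :
  size xs = size (undup G) -> all (fun x => 1 <= x) xs ->
  vdiff (Bv ws (head [::] pi) pi xs (undup G)) = 0 ->
  size ys = size (undup G) -> has (fun y => 0 < y) ys ->
  vdiff (Zv ws ys (undup G)) = 0 ->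
  ~ (exists L : seq (seq A), forall w, in_wmix ws w -> w \in L).
Proof.
move=> hxs hxs1 hbal hys hys1 hpump [L HL].
case: om hom E => [|x p] //= /andP [/eqP hx hp] E.
have := dec_inv hp hx; rewrite [dec _]/= E.
case=> pr [[Epi hpath hun hlast hsz] [hcyc [hsum hgood]]].
set gs := undup G in hxs hys hbal hpump.
have ugs : uniq gs by exact: undup_uniq.
pose m t g := nth 0 xs (index g gs) + t * nth 0 ys (index g gs).
have mpos t g : g \in G -> 0 < m t g.
  move=> gG; have ig : index g gs < size xs by rewrite hxs index_mem mem_undup.
  by rewrite /m; move/allP: hxs1 => /(_ _ (mem_nth 0 ig)) h; exact: leq_trans h (leq_addr _ _).
have Wt t : exists L', path (db_edge N) x L' /\ forall f : seq A -> nat,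
    \sum_(v <- L') f v = \sum_(v <- pr) f v + \sum_(g <- gs) m t g * \sum_(v <- behead g) f v.
  have hg : goodc (x :: pr) G by rewrite -Epi.
  have [L' [hp' hs' _ _]] := splice_all hg hcyc (mpos t) hpath.
  exists L'; split => // f; rewrite hs'; congr (_ + _); apply: sum_perm_mem.
pose bal u := nocc u x + Fs u pi + \sum_(q <- zip xs gs) q.1 * Fs u q.2.
pose pmp u := \sum_(q <- zip ys gs) q.1 * Fs u q.2.
have cb := const_ws (F := bal) hbal (Bv_size _ _ _ _ _)
  (fun t ht => etrans (@Bv_nth _ ws _ pi xs gs t ht) (congr1 (fun z => nocc _ z + _ + _) (f_equal (head [::]) Epi))).
have cp := const_ws (F := pmp) hpump (Zv_size _ _ _) (fun t ht => @Zv_nth _ ws ys gs t ht).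
have [i0 hi0 yi0] : exists2 i0, i0 < size ys & 0 < nth 0 ys i0.
  by case/(has_nthP 0): hys1 => i0 h1 h2; exists i0.
have g0in : nth [::] gs i0 \in gs by rewrite mem_nth // -hys.
have g0G : nth [::] gs i0 \in G by rewrite -mem_undup.
have [c0 [r0 [[Eg0 _ _ rn0 _] _]]] := hcyc _ g0G.
have key t u : u \in ws -> exists L', [/\ path (db_edge N) x L',
   (forall u', u' \in ws -> nocc u' (wordof N x L') = bal u + t * pmp u) & t <= size L'].
  move=> uws; have [L' [hp' hs']] := Wt t; exists L'; split => //; last first.
    have hS : 0 < size (behead (nth [::] gs i0)) by rewrite Eg0; case: (r0) rn0.
    rewrite -sum1_size (hs' (fun _ => 1)).
    rewrite [X in _ + X](eq_bigr (fun g => m t g * size (behead g))); last by move=> g _; rewrite sum1_size.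
    apply: leq_trans (leq_addl _ _).
    apply: leq_trans (leq_sum_mem (fun g => m t g * size (behead g)) g0in).
    rewrite /m index_uniq ?hys -?hys //.
    apply: leq_trans (leq_pmulr _ hS); apply: leq_trans (leq_addl _ _); exact: leq_pmulr.
  move=> u' u'ws.
  have [h1 _] := walk_word N1 hp' hx (hu _ u'ws).
  rewrite h1 hs' (cb u u') // (cp u u') // /bal /pmp Epi /Fs /= -!addnA; congr (_ + (_ + _)).
  set FF := fun g : seq (seq A) => \sum_(v <- behead g) (suffix u' v : nat).
  have -> : \sum_(q <- zip xs gs) q.1 * \sum_(v <- behead q.2) suffix u' v = \sum_(q <- zip xs gs) q.1 * FF q.2 by [].
  have -> : \sum_(q <- zip ys gs) q.1 * \sum_(v <- behead q.2) suffix u' v = \sum_(q <- zip ys gs) q.1 * FF q.2 by [].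
  rewrite !zip_index //.
  congr (_ + _); rewrite big_distrr -big_split /=; apply: eq_bigr => g _.
  by rewrite /m mulnDl mulnA.
have [u0 u0ws] : exists u0, u0 \in ws by case: (ws) ws0 => [//|u0 ws'] _; exists u0; rewrite mem_head.
have [L' [hp' hw hsz']] := key (\max_(w <- L) size w).+1 u0 u0ws.
set w := wordof N x L' in hw.
have hwL : w \in L by apply: HL => a b ha hb; rewrite !hw.
have : size w <= \max_(w <- L) size w := leq_bigmax_seq w hwL erefl.
rewrite /w size_wordof // leqNgt => /negP; apply.
by apply: leq_trans hsz' _; rewrite leq_addl.
Qed.

Lemma dec_facts (A : finType) N (N1 : 0 < N) x (p : seq (seq A)) pi G :
  path (db_edge N) x p -> size x = N -> dec (x :: p) = (pi, G) ->
  exists pr, [/\ pi = x :: pr, uniq pi, all (fun v => size v == N) pi,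
    (forall g, g \in G -> cyc N g) &
    (forall f : seq A -> nat, \sum_(v <- p) f v =
        \sum_(v <- pr) f v + \sum_(g <- G) \sum_(v <- behead g) f v)].
Proof.
move=> hp hx E; have := dec_inv hp hx; rewrite E.
by case=> pr [[Epi _ hun _ hsz] [hcyc [hsum _]]]; exists pr; split.
Qed.

Lemma tot_lemma (A : finType) N (N1 : 0 < N) x (p : seq (seq A)) pr G u :
  path (db_edge N) x p -> size x = N -> size u <= N ->
  (forall f : seq A -> nat, \sum_(v <- p) f v =
        \sum_(v <- pr) f v + \sum_(g <- G) \sum_(v <- behead g) f v) ->
  nocc u (wordof N x p) = nocc u x + \sum_(v <- pr) suffix u v + \sum_(g <- G) Fs u g.
Proof.
move=> hp hx hu hsum; have [h1 _] := walk_word N1 hp hx hu.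
by rewrite h1 hsum addnA.
Qed.

Lemma sub_sum (T : eqType) (gs : seq T) (a b F : T -> nat) :
  (forall g, g \in gs -> b g <= a g) ->
  \sum_(g <- gs) (a g - b g) * F g + \sum_(g <- gs) b g * F g = \sum_(g <- gs) a g * F g.
Proof.
move=> h; rewrite -big_split /=; apply: eq_big_seq => g gin.
by rewrite -mulnDl subnK // h.
Qed.

Lemma inU (A : finType) N (s : seq (seq A)) :
  (forall v, v \in s -> size v == N) -> uniq (behead s) ->
  s \in allseqs (allseqs (enum A) N) (size (allseqs (enum A) N)).+1.
Proof.
move=> hs hu.
have sub : {subset s <= allseqs (enum A) N}.
  move=> v vs; apply: mem_allseqs; first by apply/allP => a _; apply: mem_enum.
  by rewrite (eqP (hs v vs)).
apply: mem_allseqs; first by apply/allP => v /sub.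
case: s hs hu sub => //= v s hs hu sub; rewrite ltnS; apply: uniq_leq_size => // z zs.
by apply: sub; rewrite inE zs orbT.
Qed.


Lemma dir12 (A : finType) (ws : seq (seq A)) N (N1 : 0 < N)
  (hu : forall u, u \in ws -> size u <= N) :
  ~ (exists L : seq (seq A), forall w, in_wmix ws w -> w \in L) ->
  exists om pi G, [/\ db_walk N om, dec om = (pi, G),
     (exists xs : seq nat, [/\ size xs = size (undup G), all (fun x => 1 <= x) xs &
        vdiff (Bv ws (head [::] pi) pi xs (undup G)) = 0]) &
     (exists ys : seq nat, [/\ size ys = size (undup G), has (fun y => 0 < y) ys &
        vdiff (Zv ws ys (undup G)) = 0])].
Proof.
move=> Hinf.
have Ex n : exists w, in_wmix ws w /\ n < size w.
  apply: NNPP => hn; apply: Hinf; exists (allseqs (enum A) n) => w hw.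
  apply: mem_allseqs; first by apply/allP => a _; apply: mem_enum.
  rewrite leqNgt; apply/negP => h; apply: hn; by exists w.
pose F n := proj1_sig (constructive_indefinite_description _ (Ex n)).
have FP n : in_wmix ws (F n) /\ n < size (F n).
  exact: (proj2_sig (constructive_indefinite_description _ (Ex n))).
pose sq k := iter k (fun w => F (size w)) (F N).
have sW k : in_wmix ws (sq k) by case: k => [|k]; [exact: (FP N).1|exact: (FP _).1].
have sI k : size (sq k) < size (sq k.+1) by exact: (FP (size (sq k))).2.
have sN k : N < size (sq k).
  elim: k => [|k IH]; first exact: (FP N).2.
  exact: ltn_trans IH (sI k).
have sMono i j : i < j -> size (sq i) < size (sq j).
  by move=> hij; apply: (homo_ltn (@ltn_trans) sI).
have WW k : exists p, path (db_edge N) (take N (sq k)) p /\ wordof N (take N (sq k)) p = sq k.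
  by apply: (word_walk N1); exact: ltnW (sN k).
pose P k := proj1_sig (constructive_indefinite_description _ (WW k)).
have PP k : path (db_edge N) (take N (sq k)) (P k) /\ wordof N (take N (sq k)) (P k) = sq k.
  exact: (proj2_sig (constructive_indefinite_description _ (WW k))).
pose X k := take N (sq k).
have hX k : size (X k) = N by rewrite size_takel // ltnW.
pose D k := dec (X k :: P k).
pose U := allseqs (allseqs (enum A) N) (size (allseqs (enum A) N)).+1.
pose phi (tg : nat) (o : seq (seq A)) (k : nat) : nat :=
  match tg with
  | 0 => (D k).1 == o
  | 1 => (D k).1 != o
  | 2 => o \in (D k).2
  | 3 => o \notin (D k).2
  | _ => count_mem o (D k).2
  end.
pose ks := [seq (tg, o) | tg <- iota 0 5, o <- U].
have [i [j [hij hcmp]]] := dickson2 (size ks) (fun k t => phi (nth (0, [::]) ks t).1 (nth (0, [::]) ks t).2 k).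
have cmp tg o : tg < 5 -> o \in U -> phi tg o i <= phi tg o j.
  move=> htg ho.
  have kin : (tg, o) \in ks by apply: allpairs_f => //; rewrite mem_iota.
  by have := hcmp (index (tg, o) ks); rewrite index_mem kin nth_index //; apply.
case Ei: (D i) => [pii Gi]; case Ej: (D j) => [pij Gj].
have [pri [Epi hui hszi hcyci hsumi]] := dec_facts N1 (PP i).1 (hX i) Ei.
have [prj [Epj huj hszj hcycj hsumj]] := dec_facts N1 (PP j).1 (hX j) Ej.
have cycU (G : seq (seq (seq A))) g : (forall g, g \in G -> cyc N g) -> g \in G -> g \in U.
  move=> hc gG; have [c [r [[Eg _ _ _ ur] hs]]] := hc g gG.
  by apply: inU; [move=> v vg; exact: (allP hs) | rewrite Eg].
have piU : pii \in U.
  apply: inU; first by move=> v vp; exact: (allP hszi).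
  by move: hui; rewrite Epi /= => /andP [].
have epi : pij = pii.
  have := cmp 0 pii isT piU; rewrite /phi Ei Ej /= eqxx.
  by case: eqP.
have Gsub1 : {subset Gj <= Gi}.
  move=> o oG; have := cmp 3 o isT (cycU _ _ hcycj oG); rewrite /phi Ei Ej /= oG.
  by case: (o \in Gi).
have Gsub2 : {subset Gi <= Gj}.
  move=> o oG; have := cmp 2 o isT (cycU _ _ hcyci oG); rewrite /phi Ei Ej /= oG.
  by case: (o \in Gj).
have cnt o : o \in Gi -> count_mem o Gi <= count_mem o Gj.
  by move=> oG; have := cmp 4 o isT (cycU _ _ hcyci oG); rewrite /phi Ei Ej.
have eX : X j = X i by move: epi; rewrite Epi Epj => [[]].
have epr : prj = pri by move: epi; rewrite Epi Epj => [[]].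
set gs := undup Gi.
have memgs : gs =i Gi by move=> z; rewrite mem_undup.
have totk k pr G u : u \in ws -> (forall f : seq A -> nat, \sum_(v <- P k) f v =
        \sum_(v <- pr) f v + \sum_(g <- G) \sum_(v <- behead g) f v) ->
    nocc u (sq k) = nocc u (X k) + \sum_(v <- pr) suffix u v + \sum_(g <- G) Fs u g.
  move=> uws hs; rewrite -{1}(PP k).2.
  exact: (tot_lemma N1 (PP k).1 (hX k) (hu _ uws) hs).
have sumGj (H : seq (seq A) -> nat) :
    \sum_(g <- Gj) H g = \sum_(g <- gs) count_mem g Gj * H g.
  rewrite [LHS]sum_undup_count; apply: (@sum_perm_mem _ (undup Gj) gs (fun g => count_mem g Gj * H g)); rewrite ?undup_uniq //.
  by move=> z; rewrite !mem_undup; apply/idP/idP => [/Gsub1|/Gsub2].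
exists (X i :: P i), pii, Gi; split.
- by apply/andP; split; [apply/eqP; exact: hX | exact: (PP i).1].
- exact: Ei.
- exists [seq count_mem g Gi | g <- gs]; split; first by rewrite size_map.
    rewrite all_map; apply/allP => g; rewrite memgs /= => gG.
    by rewrite -has_count has_pred1.
  have val t : t < size ws -> nth 0 (Bv ws (head [::] pii) pii [seq count_mem g Gi | g <- gs] gs) t =
      nocc (nth [::] ws t) (sq i).
    move=> ht; rewrite Bv_nth // zip_map_self -sum_undup_count.
    by rewrite (totk i pri Gi _ (mem_nth _ ht) hsumi) Epi.
  apply/vdiff0P => t t'; rewrite Bv_size => ht ht'; rewrite !val //.
  by apply: sW; apply: mem_nth.
- exists [seq count_mem g Gj - count_mem g Gi | g <- gs]; split; first by rewrite size_map.
    case: (boolP (has _ _)) => // hn; exfalso.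
    have eqc g : g \in gs -> count_mem g Gj = count_mem g Gi.
      move=> gin; apply/eqP; rewrite eqn_leq cnt -?memgs // andbT.
      move: hn; rewrite has_map -all_predC => /allP /(_ g gin) /=.
      by rewrite lt0n negbK subn_eq0.
    have sz k pr G : (forall f : seq A -> nat, \sum_(v <- P k) f v =
        \sum_(v <- pr) f v + \sum_(g <- G) \sum_(v <- behead g) f v) ->
      size (sq k) = N + size pr + \sum_(g <- G) size (behead g).
      move=> hs; rewrite -(PP k).2 size_wordof ?hX ?(PP k).1 //.
      rewrite -sum1_size hs sum1_size -addnA; congr (_ + (_ + _)).
      by apply: eq_bigr => g _; rewrite sum1_size.
    have := sMono _ _ hij; rewrite (sz i pri Gi hsumi) (sz j prj Gj hsumj) epr.
    rewrite sumGj (eq_big_seq (fun g => count_mem g Gi * size (behead g))); last first.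
      by move=> g gin; rewrite eqc.
    by rewrite -(sum_undup_count Gi (fun g => size (behead g))) ltnn.
  have val t : t < size ws -> nth 0 (Zv ws [seq count_mem g Gj - count_mem g Gi | g <- gs] gs) t =
      nocc (nth [::] ws t) (sq j) - nocc (nth [::] ws t) (sq i).
    move=> ht; set u := nth [::] ws t; have uws : u \in ws by apply: mem_nth.
    rewrite Zv_nth // zip_map_self.
    have h1 := @sub_sum _ gs (fun g => count_mem g Gj) (fun g => count_mem g Gi) (Fs u)
      (fun g gin => cnt g (etrans (esym (memgs g)) gin)).
    have h2 : \sum_(g <- gs) count_mem g Gi * Fs u g = \sum_(g <- Gi) Fs u g.
      by rewrite [RHS]sum_undup_count.
    have h3 := sumGj (Fs u).
    rewrite (totk i pri Gi _ uws hsumi) (totk j prj Gj _ uws hsumj) eX epr.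
    move: h1; rewrite h2 -h3.
    set S1 := \sum_(g <- gs) _; set S2 := \sum_(g <- Gi) _; set S3 := \sum_(g <- Gj) _.
    move=> h1; rewrite -h1; lia.
  apply/vdiff0P => t t'; rewrite Zv_size => ht ht'; rewrite !val //.
  by rewrite (sW i _ (nth [::] ws t')) ?(sW j _ (nth [::] ws t')) //; apply: mem_nth.
Qed.

Theorem theorem1 (A : finType) (ws : seq (seq A)) :
  let N := \max_(w <- ws) size w in
  1 <= N ->
  (~ (exists L : seq (seq A), forall w, in_wmix ws w -> w \in L))
  <->
  (exists om : seq (seq A),
     db_walk N om /\
     let pi := (dec om).1 in
     let gs := undup (dec om).2 in
     (exists xs : seq nat,
        size xs = size gs /\ all (fun x => 1 <= x) xs /\
        vdiff (vadd (vadd (occ_word (head [::] pi) ws) (occ_walk pi ws))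
                    (vsum (size ws) [seq vscale p.1 (occ_walk p.2 ws) | p <- zip xs gs]))
        = 0) /\
     (exists ys : seq nat,
        size ys = size gs /\ has (fun y => 0 < y) ys /\
        vdiff (vsum (size ws) [seq vscale p.1 (occ_walk p.2 ws) | p <- zip ys gs]) = 0)).
Proof.
move=> N N1.
have hu : forall u, u \in ws -> size u <= N.
  by move=> u h; exact: (leq_bigmax_seq u h erefl).
have ws0 : ws != [::].
  by apply/eqP => E; move: N1; rewrite /N E big_nil.
split.
- move=> Hinf.
  have [om [pi [G [hom E [xs [h1 h2 h3]] [ys [h4 h5 h6]]]]]] := dir12 N1 hu Hinf.
  exists om; split => //; rewrite E /=.
  by split; [exists xs | exists ys].
- move=> [om [hom]]; case E: (dec om) => [pi G] /=.
  move=> [[xs [h1 [h2 h3]]] [ys [h4 [h5 h6]]]].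
  exact: (dir21 N1 hu ws0 hom E h1 h2 h3 h4 h5 h6).
Qed.
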